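(* Let $(T_1,\dots,T_k)$ be a tuple of contractions on a Hilbert space $\mathcal{H}$ and $q_{ij}\in\mathbb{T}$ ($1\le i<j\le k$) such that $T_iT_j=q_{ij}T_jT_i$ and $T_iT_j^*=\overline{q_{ij}}\,T_j^*T_i$ for $1\le i<j\le k$. Let $G_{dc}$ be the group described in the context and define $T:G_{dc}\to\mathcal{B}(\mathcal{H})$ by \[ T\Big(\prod_{1\le i<j\le k}q_{ij}^{m_{ij}}s_1^{m_1}\cdots s_k^{m_k}\Big)=\prod_{1\le i<j\le k}q_{ij}^{m_{ij}}\,T_1(m_1)\cdots T_k(m_k), \] where on the right $q_{ij}^{m_{ij}}$ denotes the power of the scalar $q_{ij}$. Then $T$ is positive definite if and only if \[ S(u)=\sum_{v\subseteq u}(-1)^{|v|}T(x^{e(v)})^*T(x^{e(v)})\ge 0 \] for every subset $u$ of $\{1,\dots,k\}$.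
   Context: For a contraction $C$ and $m\in\mathbb{Z}$: $C(m)=C^m$ if $m\ge1$, $C(0)=I$, and $C(m)=(C^* )^{|m|}$ if $m<0$. The group $G_{dc}$ consists of formal elements $x^m=\prod_{1\le i<j\le k}q_{ij}^{m_{ij}}s_1^{m_1}\cdots s_k^{m_k}$ indexed by $m=(m_{ij}\,(1\le i<j\le k);\,m_1,\dots,m_k)$ with all entries in $\mathbb{Z}$, where $s_1,\dots,s_k$ and $q_{ij}$ are indeterminates subject to $s_is_j=q_{ij}s_js_i$, $s_is_j^{-1}=q_{ij}^{-1}s_j^{-1}s_i$ ($i<j$), with the $q_{ij}$ central; concretely the product is $x^mx^n=\prod_{1\le i<j\le k}q_{ij}^{-n_im_j}\,x^{m+n}$ (i.e. the $q_{ij}$-exponents add and are corrected by $-n_im_j$, the $s_l$-exponents add), the identity is $x^0$ and $(x^m)^{-1}=\prod_{i<j}q_{ij}^{-m_im_j}x^{-m}$. For $v\subseteq\{1,\dots,k\}$, $x^{e(v)}=s_1^{e_1}\cdots s_k^{e_k}$ with $e_l=1$ if $l\in v$ and $0$ otherwise (all $q_{ij}$-exponents zero); thus $T(x^{e(v)})$ is the product of the $T_l$, $l\in v$, in increasing order of $l$. A function $T:G\to\mathcal{B}(\mathcal{H})$ on a group $G$ is positive definite if $T(s^{-1})=T(s)^*$ for all $s\in G$ and $\sum_{s,t\in G}\langle T(t^{-1}s)h(s),h(t)\rangle\ge0$ for every finitely supported $h:G\to\mathcal{H}$. *)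

(* Defs.v *)
From mathcomp Require Import all_boot all_order all_algebra.
From mathcomp Require Import reals complex.
Set Implicit Arguments. Unset Strict Implicit. Unset Printing Implicit Defensive.
Import Order.TTheory GRing.Theory Num.Theory.
Local Open Scope ring_scope.

Record is_hilbert (R : realType) (H : lmodType R[i]) (ip : H -> H -> R[i]) : Prop := {
  ip_linear : forall (a : R[i]) (x y z : H), ip (a *: x + y) z = a * ip x z + ip y z;
  ip_conj : forall x y : H, ip y x = (ip x y)^*;
  ip_ge0 : forall x : H, 0 <= ip x x;
  ip_eq0 : forall x : H, ip x x = 0 -> x = 0;
  ip_complete : forall u : nat -> H,
    (forall eps : R[i], 0 < eps -> exists N : nat, forall m n : nat,
        (N <= m)%N -> (N <= n)%N -> ip (u m - u n) (u m - u n) < eps) ->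
    exists l : H, forall eps : R[i], 0 < eps -> exists N : nat, forall n : nat,
        (N <= n)%N -> ip (u n - l) (u n - l) < eps }.

Definition is_linear_op (R : realType) (H : lmodType R[i]) (A : H -> H) : Prop :=
  forall (a : R[i]) (x y : H), A (a *: x + y) = a *: A x + A y.

Definition is_adjoint (R : realType) (H : lmodType R[i]) (ip : H -> H -> R[i])
  (A B : H -> H) : Prop := forall x y : H, ip (A x) y = ip x (B y).

Definition is_contraction (R : realType) (H : lmodType R[i]) (ip : H -> H -> R[i])
  (A : H -> H) : Prop := forall x : H, ip (A x) (A x) <= ip x x.

(* C(m) : C^m for m >= 0 (C^0 = I), (C^* )^{|m|} for m < 0; Negz n = -(n+1). *)
Definition opow (R : realType) (H : lmodType R[i]) (A Aadj : H -> H) (m : int) : H -> H :=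
  match m with
  | Posz n => iter n A
  | Negz n => iter n.+1 Aadj
  end.

Definition ltpair (k : nat) := {p : 'I_k * 'I_k | (p.1 < p.2)%N}.

(* x^m with m = (m_ij (i<j); m_1, ..., m_k) *)
Definition Gdc (k : nat) := ({ffun ltpair k -> int} * {ffun 'I_k -> int})%type.

(* x^m x^n = prod q_ij^{-n_i m_j} x^{m+n} *)
Definition gmul (k : nat) (x y : Gdc k) : Gdc k :=
  ([ffun p : ltpair k => x.1 p + y.1 p - y.2 (sval p).1 * x.2 (sval p).2],
   [ffun l => x.2 l + y.2 l]).

(* (x^m)^{-1} = prod q_ij^{-m_i m_j} x^{-m} *)
Definition ginv (k : nat) (x : Gdc k) : Gdc k :=
  ([ffun p : ltpair k => - x.1 p - x.2 (sval p).1 * x.2 (sval p).2],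
   [ffun l => - x.2 l]).

(* x^{e(v)} = s_1^{e_1} ... s_k^{e_k} *)
Definition xe (k : nat) (v : {set 'I_k}) : Gdc k :=
  ([ffun _ => 0], [ffun l => ((l \in v) : nat)%:Z]).

Definition Tdc (R : realType) (H : lmodType R[i]) (k : nat)
  (q : 'I_k -> 'I_k -> R[i]) (A Aadj : 'I_k -> H -> H) (g : Gdc k) : H -> H :=
  fun h => (\prod_(p : ltpair k) q (sval p).1 (sval p).2 ^ g.1 p) *:
    foldr (fun l f => opow (A l) (Aadj l) (g.2 l) \o f) id (enum 'I_k) h.

(* Positive definiteness of a function F : G_dc -> B(H): F(s^{-1}) = F(s)^*
   and sum_{s,t} <F(t^{-1}s) h(s), h(t)> >= 0 for finitely supported h
   (support contained in the duplicate-free list S). *)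
Definition posdef_Gdc (R : realType) (H : lmodType R[i]) (ip : H -> H -> R[i])
  (k : nat) (F : Gdc k -> H -> H) : Prop :=
  (forall s : Gdc k, is_adjoint ip (F s) (F (ginv s))) /\
  (forall (S : seq (Gdc k)) (h : Gdc k -> H), uniq S ->
     0 <= \sum_(s <- S) \sum_(t <- S) ip (F (gmul (ginv t) s) (h s)) (h t)).

(* Main.v *)
Require Import Defs.
From mathcomp Require Import all_boot all_order all_algebra.
From mathcomp Require Import reals complex.
From mathcomp Require Import zify ring lra.
Import Order.TTheory GRing.Theory Num.Theory.
Local Open Scope ring_scope.
Set Implicit Arguments. Unset Strict Implicit. Unset Printing Implicit Defensive.


Section Main.
Variables (R : realType) (H : lmodType R[i]) (ip : H -> H -> R[i]) (k : nat).
Variables (A Aadj : 'I_k -> H -> H) (q : 'I_k -> 'I_k -> R[i]).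
Hypothesis Hhil : is_hilbert ip.
Hypothesis HlinA : forall l, is_linear_op (A l).
Hypothesis HlinAa : forall l, is_linear_op (Aadj l).
Hypothesis Hadj : forall l, is_adjoint ip (A l) (Aadj l).
Hypothesis Hq : forall i j : 'I_k, (i < j)%N -> `|q i j| = 1.
Hypothesis Hcomm : forall i j : 'I_k, (i < j)%N -> forall x : H,
      A i (A j x) = q i j *: A j (A i x) /\
      A i (Aadj j x) = (q i j)^* *: Aadj j (A i x).

Lemma ipC x y : ip y x = (ip x y)^*. Proof. exact: (ip_conj Hhil). Qed.

Lemma ipD x y z : ip (x + y) z = ip x z + ip y z.
Proof. by have := ip_linear Hhil 1 x y z; rewrite scale1r mul1r. Qed.
Lemma ip0l z : ip 0 z = 0.
Proof. have E := ipD 0 0 z; rewrite addr0 in E; apply: (addrI (ip 0 z)); by rewrite addr0 -E. Qed.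
Lemma ipZ a x z : ip (a *: x) z = a * ip x z.
Proof. by have := ip_linear Hhil a x 0 z; rewrite addr0 ip0l addr0. Qed.
Lemma ipN x z : ip (- x) z = - ip x z.
Proof. by rewrite -scaleN1r ipZ mulN1r. Qed.
Lemma ipB x y z : ip (x - y) z = ip x z - ip y z.
Proof. by rewrite ipD ipN. Qed.
Lemma ipDr x y z : ip z (x + y) = ip z x + ip z y.
Proof. by rewrite (ipC (x+y) z) (ipC x z) (ipC y z) ipD rmorphD. Qed.
Lemma ipZr a x z : ip z (a *: x) = a^* * ip z x.
Proof. by rewrite (ipC (a *: x) z) (ipC x z) ipZ rmorphM. Qed.
Lemma ip0r z : ip z 0 = 0.
Proof. by rewrite ipC ip0l rmorph0. Qed.
Lemma ipNr x z : ip z (- x) = - ip z x.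
Proof. by rewrite -scaleN1r ipZr rmorphN1 mulN1r. Qed.
Lemma ip_suml (I : Type) (s : seq I) (f : I -> H) z :
  ip (\sum_(i <- s) f i) z = \sum_(i <- s) ip (f i) z.
Proof.
elim: s => [|a s IH]; first by rewrite !big_nil ip0l.
by rewrite !big_cons ipD IH.
Qed.
Lemma ip_sumr (I : Type) (s : seq I) (f : I -> H) z :
  ip z (\sum_(i <- s) f i) = \sum_(i <- s) ip z (f i).
Proof.
elim: s => [|a s IH]; first by rewrite !big_nil ip0r.
by rewrite !big_cons ipDr IH.
Qed.
Lemma ip_ext x x' : (forall y, ip x y = ip x' y) -> x = x'.
Proof.
move=> E; apply: subr0_eq; apply: (ip_eq0 Hhil).
by rewrite ipB E subrr.
Qed.

Definition lin (X : H -> H) := forall (a : R[i]) x y, X (a *: x + y) = a *: X x + X y.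
Lemma linD X : lin X -> forall x y, X (x + y) = X x + X y.
Proof. by move=> L x y; have := L 1 x y; rewrite !scale1r. Qed.
Lemma lin0 X : lin X -> X 0 = 0.
Proof. move=> L; have E := linD L 0 0; rewrite addr0 in E; apply: (addrI (X 0)); by rewrite addr0 -E. Qed.
Lemma linZ X : lin X -> forall a x, X (a *: x) = a *: X x.
Proof. by move=> L a x; rewrite -[a *: x]addr0 L lin0 // addr0. Qed.
Lemma linN X : lin X -> forall x, X (- x) = - X x.
Proof. by move=> L x; rewrite -scaleN1r linZ // scaleN1r. Qed.
Lemma linB X : lin X -> forall x y, X (x - y) = X x - X y.
Proof. by move=> L x y; rewrite linD // linN. Qed.
Lemma lin_sum X : lin X -> forall (I : Type) (s : seq I) (f : I -> H),
  X (\sum_(i <- s) f i) = \sum_(i <- s) X (f i).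
Proof.
move=> L I s f; elim: s => [|a s IH]; first by rewrite !big_nil lin0.
by rewrite !big_cons linD // IH.
Qed.
Lemma lin_id : lin id. Proof. by []. Qed.
Lemma lin_comp X Y : lin X -> lin Y -> lin (X \o Y).
Proof. by move=> LX LY a x y /=; rewrite LY LX. Qed.
Lemma lin_iter X n : lin X -> lin (iter n X).
Proof. by move=> L; elim: n => [//|n IH] a x y /=; rewrite IH L. Qed.
Lemma lin_scale c X : lin X -> lin (fun x => c *: X x).
Proof. by move=> L a x y; rewrite L scalerDr !scalerA mulrC. Qed.
Lemma lin_sub X Y : lin X -> lin Y -> lin (fun x => X x - Y x).
Proof. by move=> LX LY a x y /=; rewrite LX LY opprD addrACA scalerBr. Qed.

Lemma linA l : lin (A l). Proof. exact: HlinA. Qed.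
Lemma linAa l : lin (Aadj l). Proof. exact: HlinAa. Qed.

Definition T l (d : int) : H -> H := opow (A l) (Aadj l) d.
Lemma linT l d : lin (T l d).
Proof. by case: d => n; apply: lin_iter; [apply: linA | apply: linAa]. Qed.

Lemma adjA l x y : ip (A l x) y = ip x (Aadj l y). Proof. exact: Hadj. Qed.
Lemma adjAa l x y : ip (Aadj l x) y = ip x (A l y).
Proof. by rewrite ipC -adjA -ipC. Qed.
Lemma adj_iter (X Y : H -> H) n : (forall x y, ip (X x) y = ip x (Y y)) ->
  forall x y, ip (iter n X x) y = ip x (iter n Y y).
Proof.
move=> E; elim: n => [//|n IH] x y /=.
by rewrite E IH -iterSr.
Qed.
Lemma adjT l d x y : ip (T l d x) y = ip x (T l (- d) y).
Proof.
case: d => [[|n]|n]; first by [].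
- exact: (adj_iter n.+1 (@adjA l)).
- exact: (adj_iter n.+1 (@adjAa l)).
Qed.


Lemma qunit (i j : 'I_k) : (i < j)%N -> q i j \is a GRing.unit.
Proof. by move=> lt; rewrite unitfE -normr_eq0 Hq // oner_eq0. Qed.
Lemma qconj (i j : 'I_k) : (i < j)%N -> (q i j)^* = (q i j)^-1.
Proof. by move=> lt; rewrite invC_norm Hq // expr1n invr1 mul1r. Qed.
Lemma qconjV (i j : 'I_k) : (i < j)%N -> ((q i j)^-1)^* = q i j.
Proof. by move=> lt; rewrite -qconj // conjCK. Qed.

Lemma R1 (i j : 'I_k) x : (i < j)%N -> A i (A j x) = q i j *: A j (A i x).
Proof. by move=> lt; case: (Hcomm lt x). Qed.
Lemma R2 (i j : 'I_k) x : (i < j)%N -> A i (Aadj j x) = (q i j)^-1 *: Aadj j (A i x).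
Proof. by move=> lt; case: (Hcomm lt x) => _ ->; rewrite qconj. Qed.
Lemma R3 (i j : 'I_k) x : (i < j)%N -> Aadj i (A j x) = (q i j)^-1 *: A j (Aadj i x).
Proof.
move=> lt; apply: ip_ext => y.
rewrite ipZ adjAa adjA adjA adjAa R2 //. rewrite (ipZr (q i j)^-1 (Aadj j (A i y)) x) qconjV //.
by rewrite mulrA mulVf ?mul1r // -unitfE qunit.
Qed.
Lemma R4 (i j : 'I_k) x : (i < j)%N -> Aadj i (Aadj j x) = q i j *: Aadj j (Aadj i x).
Proof.
move=> lt; apply: ip_ext => y.
rewrite ipZ !adjAa (R1 y lt) ipZr qconj //.
by rewrite mulrA mulfV ?mul1r // -unitfE qunit.
Qed.

Lemma iter_comm1 (X Y : H -> H) c : lin X -> (forall x, X (Y x) = c *: Y (X x)) ->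
  lin Y -> forall m x, X (iter m Y x) = c ^+ m *: iter m Y (X x).
Proof.
move=> LX E LY; elim=> [|m IH] x /=; first by rewrite scale1r.
by rewrite E IH linZ // scalerA exprS.
Qed.
Lemma iter_comm (X Y : H -> H) c : lin X -> lin Y -> (forall x, X (Y x) = c *: Y (X x)) ->
  forall n m x, iter n X (iter m Y x) = c ^+ (n * m) *: iter m Y (iter n X x).
Proof.
move=> LX LY E; elim=> [|n IH] m x /=; first by rewrite mul0n scale1r.
rewrite IH linZ // (iter_comm1 LX E LY) scalerA -exprD; congr (_ ^+ _ *: _).
by rewrite mulSn addnC.
Qed.

Lemma Tcomm (i j : 'I_k) a b x : (i < j)%N ->
  T i a (T j b x) = q i j ^ (a * b) *: T j b (T i a x).
Proof.
move=> lt; have U := qunit lt.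
case: a => n; case: b => m; rewrite /T /opow.
- by rewrite (iter_comm (linA i) (linA j) (fun y => R1 y lt)) -PoszM.
- rewrite (iter_comm (linA i) (linAa j) (fun y => R2 y lt)).
  by rewrite NegzE mulrN -PoszM -exprnN exprVn.
- rewrite (iter_comm (linAa i) (linA j) (fun y => R3 y lt)).
  by rewrite NegzE mulNr -PoszM -exprnN exprVn mulnC.
- rewrite (iter_comm (linAa i) (linAa j) (fun y => R4 y lt)).
  by rewrite !NegzE mulrNN -PoszM.
Qed.


Lemma iota_split (j n : nat) : (j < n)%N ->
  iota 0 n = [seq x <- iota 0 n | (x < j)%N] ++ j :: [seq x <- iota 0 n | (j < x)%N].
Proof.
move=> ljn.
have -> : iota 0 n = iota 0 j ++ j :: iota j.+1 (n - j.+1).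
  by rewrite -[j :: _]/(iota j (n - j.+1).+1) subnSK // -[in RHS](add0n j) -iotaD subnKC // ltnW.
rewrite !filter_cat /= ltnn /=.
have E1 : [seq x <- iota 0 j | (x < j)%N] = iota 0 j.
  by apply/all_filterP/allP => x; rewrite mem_iota.
have E2 : [seq x <- iota j.+1 (n - j.+1) | (x < j)%N] = [::].
  rewrite (eq_in_filter (a2 := pred0)) ?filter_pred0 // => x.
  by rewrite mem_iota => /andP[h _] /=; apply/negbTE; rewrite -leqNgt ltnW.
have E3 : [seq x <- iota 0 j | (j < x)%N] = [::].
  rewrite (eq_in_filter (a2 := pred0)) ?filter_pred0 // => x.
  by rewrite mem_iota => /andP[_ h] /=; apply/negbTE; rewrite -leqNgt ltnW.
have E4 : [seq x <- iota j.+1 (n - j.+1) | (j < x)%N] = iota j.+1 (n - j.+1).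
  by apply/all_filterP/allP => x; rewrite mem_iota => /andP[].
by rewrite E1 E2 E3 E4 cats0 cat0s.
Qed.

Lemma enum_split (jo : 'I_k) :
  enum 'I_k = [seq l : 'I_k <- enum 'I_k | (l < jo)%N] ++ (jo :: [seq l : 'I_k <- enum 'I_k | (jo < l)%N] : seq 'I_k).
Proof.
have F : forall P : pred nat,
    map val [seq l : 'I_k <- enum 'I_k | P (val l)] = [seq x <- iota 0 k | P x].
  by move=> P; rewrite -val_enum_ord filter_map.
apply: (inj_map val_inj); rewrite map_cat /= (F (fun x => x < jo)%N) (F (fun x => jo < x)%N).
rewrite val_enum_ord; exact: iota_split.
Qed.

Lemma filter_ltS (jo : 'I_k) :
  [seq l : 'I_k <- enum 'I_k | (l < jo.+1)%N] = [seq l : 'I_k <- enum 'I_k | (l < jo)%N] ++ [:: jo].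
Proof.
rewrite [in LHS](enum_split jo) filter_cat /= ltnSn; congr (_ ++ _ :: _).
  apply/all_filterP/allP => l; rewrite mem_filter => /andP[h _].
  by rewrite ltnS ltnW.
rewrite (eq_in_filter (a2 := pred0)) ?filter_pred0 // => x.
by rewrite mem_filter => /andP[h _] /=; rewrite ltnS leqNgt h.
Qed.

Lemma filter_ltk : [seq l : 'I_k <- enum 'I_k | (l < k)%N] = enum 'I_k.
Proof. by apply/all_filterP/allP => l _; exact: ltn_ord. Qed.

Lemma filter_lt0 : [seq l : 'I_k <- enum 'I_k | (l < 0)%N] = [::].
Proof. by rewrite (eq_filter (a2 := pred0)) ?filter_pred0. Qed.


Definition chain (G : 'I_k -> H -> H) (s : seq 'I_k) : H -> H :=
  foldr (fun l f => G l \o f) id s.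

Lemma chain_nil G x : chain G [::] x = x. Proof. by []. Qed.
Lemma chain_cons G l s x : chain G (l :: s) x = G l (chain G s x). Proof. by []. Qed.
Lemma chain_cat G s1 s2 x : chain G (s1 ++ s2) x = chain G s1 (chain G s2 x).
Proof. elim: s1 x => [|l s1 IH] x //; exact: (congr1 (G l) (IH x)). Qed.
Lemma lin_chain G s : (forall l, lin (G l)) -> lin (chain G s).
Proof. move=> L; elim: s => [|l s IH] //=; exact: lin_comp. Qed.
Lemma eq_chain G G' s x : (forall l, l \in s -> forall y, G l y = G' l y) ->
  chain G s x = chain G' s x.
Proof.
elim: s x => [|l s IH] x E //; rewrite !chain_cons E ?mem_head // IH // => l' h.
by apply: E; rewrite in_cons h orbT.
Qed.
Lemma chain_idl G s x : (forall l, l \in s -> forall y, G l y = y) -> chain G s x = x.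
Proof.
elim: s x => [|l s IH] x E //; rewrite chain_cons E ?mem_head // IH // => l' h.
by apply: E; rewrite in_cons h orbT.
Qed.
Lemma chain_comm G s (Y : H -> H) (c : 'I_k -> R[i]) : (forall l, lin (G l)) ->
  (forall l, l \in s -> forall x, G l (Y x) = c l *: Y (G l x)) ->
  forall x, chain G s (Y x) = (\prod_(l <- s) c l) *: Y (chain G s x).
Proof.
move=> L; elim: s => [|l s IH] E x; first by rewrite big_nil scale1r.
rewrite !chain_cons IH; last by move=> l' h; apply: E; rewrite in_cons h orbT.
by rewrite linZ // E ?mem_head // scalerA big_cons mulrC.
Qed.
Lemma chain_adj G G' s : (forall l x y, ip (G l x) y = ip x (G' l y)) ->
  forall x y, ip (chain G s x) y = ip x (chain G' (rev s) y).
Proof.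
move=> E; elim: s => [|l s IH] x y //.
by rewrite chain_cons E IH rev_cons -cats1 chain_cat.
Qed.

Definition pre (j : nat) := [seq l : 'I_k <- enum 'I_k | (l < j)%N].
Definition W (j : nat) (d : 'I_k -> int) : H -> H := chain (fun l => T l (d l)) (pre j).
Lemma linW j d : lin (W j d). Proof. by apply: lin_chain => l; exact: linT. Qed.
Lemma W_S (jo : 'I_k) d x : W jo.+1 d x = W jo d (T jo (d jo) x).
Proof. by rewrite /W /pre filter_ltS chain_cat. Qed.
Lemma W0 d x : W 0 d x = x.
Proof. by rewrite /W /pre filter_lt0. Qed.
Lemma W_ext j d d' x : (forall l : 'I_k, (l < j)%N -> d l = d' l) -> W j d x = W j d' x.
Proof.
move=> E; apply: eq_chain => l; rewrite mem_filter => /andP[h _] y.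
by rewrite E.
Qed.

Definition psi (jo : 'I_k) (d : 'I_k -> int) (b : int) : R[i] :=
  \prod_(l <- pre jo) q l jo ^ (d l * b).

Lemma W_commT (jo : 'I_k) d b x :
  W jo d (T jo b x) = psi jo d b *: T jo b (W jo d x).
Proof.
apply: chain_comm => [l|l]; first exact: linT.
rewrite mem_filter => /andP[h _] y; exact: Tcomm.
Qed.


Definition GA (v : {set 'I_k}) l : H -> H := if l \in v then A l else id.
Definition GAa (v : {set 'I_k}) l : H -> H := if l \in v then Aadj l else id.
Definition Tv v := chain (GA v) (enum 'I_k).
Definition Tva v := chain (GAa v) (rev (enum 'I_k)).
Definition Cv v x := Tva v (Tv v x).
Definition Xu (u : {set 'I_k}) x := \sum_(v : {set 'I_k} | v \subset u) (-1) ^+ #|v| *: Cv v x.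

Lemma linGA v l : lin (GA v l). Proof. by rewrite /GA; case: (l \in v) => //; exact: linA. Qed.
Lemma linGAa v l : lin (GAa v l). Proof. by rewrite /GAa; case: (l \in v) => //; exact: linAa. Qed.
Lemma linTv v : lin (Tv v). Proof. exact/lin_chain/linGA. Qed.
Lemma linTva v : lin (Tva v). Proof. exact/lin_chain/linGAa. Qed.
Lemma linCv v : lin (Cv v). Proof. exact: lin_comp (linTva v) (linTv v). Qed.

Lemma lin_bigsum (I : Type) (r : seq I) (P : pred I) (F : I -> H -> H) :
  (forall i, lin (F i)) -> lin (fun x => \sum_(i <- r | P i) F i x).
Proof.
move=> L a x y; elim: r => [|i r IH]; first by rewrite !big_nil scaler0 addr0.
rewrite !big_cons; case: (P i) => //.
by rewrite IH L scalerDr addrACA.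
Qed.
Lemma linXu u : lin (Xu u).
Proof. by apply: lin_bigsum => v; apply: lin_scale; exact: linCv. Qed.

Lemma lin_bigsum_comm (X : H -> H) (I : Type) (r : seq I) (P : pred I) (F : I -> H) :
  lin X -> X (\sum_(i <- r | P i) F i) = \sum_(i <- r | P i) X (F i).
Proof. move=> L; apply: (big_morph X (linD L) (lin0 L)). Qed.
Lemma ip_bigsum (I : Type) (r : seq I) (P : pred I) (F : I -> H) z :
  ip (\sum_(i <- r | P i) F i) z = \sum_(i <- r | P i) ip (F i) z.
Proof. apply: (big_morph (fun x => ip x z) (fun x y => ipD x y z) (ip0l z)). Qed.

Lemma adjTv v x y : ip (Tv v x) y = ip x (Tva v y).
Proof.
apply: chain_adj => l x' y'; rewrite /GA /GAa; case: (l \in v) => //; exact: adjA.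
Qed.
Lemma ip_Cv v x : ip (Cv v x) x = ip (Tv v x) (Tv v x).
Proof. by rewrite /Cv ipC -adjTv -ipC. Qed.

Lemma Xu_ip u x :
  ip (Xu u x) x = \sum_(v : {set 'I_k} | v \subset u) (-1) ^+ #|v| * ip (Tv v x) (Tv v x).
Proof. by rewrite /Xu ip_bigsum; apply: eq_bigr => v _; rewrite ipZ ip_Cv. Qed.

Lemma Tcomm_inv (i j : 'I_k) a b x : (i < j)%N ->
  T j b (T i a x) = q i j ^ (- (a * b)) *: T i a (T j b x).
Proof.
move=> lt; rewrite (Tcomm _ _ _ lt) scalerA -exprzDr ?qunit //.
by rewrite addNr expr0z scale1r.
Qed.

Lemma TA l x : A l x = T l 1 x. Proof. by []. Qed.
Lemma TAa l x : Aadj l x = T l (-1) x. Proof. by []. Qed.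

Lemma Cv_commT (jo : 'I_k) (v : {set 'I_k}) (n : nat) x : (forall l, l \in v -> (jo < l)%N) ->
  Cv v (T jo n x) = T jo n (Cv v x).
Proof.
move=> Hv.
have E1 : Tv v (T jo n x) =
   (\prod_(l <- enum 'I_k) (if l \in v then q jo l ^ (- (n%:Z * 1)) else 1)) *: T jo n (Tv v x).
  apply: chain_comm => [l|l _ y]; first exact: linGA.
  rewrite /GA; case: ifP => lv; last by rewrite scale1r.
  by rewrite TA Tcomm_inv // Hv.
have E2 : forall y, Tva v (T jo n y) =
   (\prod_(l <- rev (enum 'I_k)) (if l \in v then q jo l ^ (- (n%:Z * -1)) else 1)) *: T jo n (Tva v y).
  move=> y; apply: chain_comm => [l|l _ z]; first exact: linGAa.
  rewrite /GAa; case: ifP => lv; last by rewrite scale1r.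
  by rewrite TAa Tcomm_inv // Hv.
rewrite /Cv E1 (linZ (linTva v)) E2 scalerA big_rev -big_split /= big1 ?scale1r // => l _.
case: ifP => lv; last by rewrite mulr1.
by rewrite -exprzDr ?qunit ?Hv // mulrN1 mulr1 opprK addNr expr0z.
Qed.

Lemma Xu_commT (jo : 'I_k) (u : {set 'I_k}) (n : nat) x : (forall l, l \in u -> (jo < l)%N) ->
  Xu u (T jo n x) = T jo n (Xu u x).
Proof.
move=> Hu; rewrite /Xu (@lin_bigsum_comm (T jo n) _ _ _ _ (linT jo n)).
apply: eq_bigr => v vu.
rewrite (linZ (linT jo n)) Cv_commT // => l lv; apply: Hu; exact: (subsetP vu).
Qed.

Lemma Ccomm (jo l : 'I_k) b x : (jo < l)%N ->
  Aadj jo (A jo (T l b x)) = T l b (Aadj jo (A jo x)).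
Proof.
move=> lt; change (T jo (-1) (T jo 1 (T l b x)) = T l b (T jo (-1) (T jo 1 x))).
rewrite (Tcomm _ _ _ lt) (linZ (linT _ _)) (Tcomm _ _ _ lt) scalerA.
by rewrite -exprzDr ?qunit // mul1r mulN1r addrN expr0z scale1r.
Qed.


Lemma ord_gtF (jo l : 'I_k) : (jo < l)%N -> (l == jo) = false.
Proof. by move=> h; apply/negbTE/eqP => e; move: h; rewrite e ltnn. Qed.
Lemma ord_ltF (jo l : 'I_k) : (l < jo)%N -> (l == jo) = false.
Proof. by move=> h; apply/negbTE/eqP => e; move: h; rewrite e ltnn. Qed.

Definition post (jo : 'I_k) := [seq l : 'I_k <- enum 'I_k | (jo < l)%N].

Lemma Tv_split (jo : 'I_k) (w : {set 'I_k}) (b : bool) x :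
  jo \notin w -> (forall l, l \in w -> (jo < l)%N) ->
  Tv (if b then jo |: w else w) x = (if b then A jo else id) (chain (GA w) (post jo) x).
Proof.
move=> jw Hw; rewrite /Tv (enum_split jo) chain_cat chain_cons chain_idl.
- rewrite {1}/GA; case: b; rewrite ?setU11 ?(negbTE jw); congr (_ _); rewrite /post.
  apply: (@eq_chain (GA (jo |: w)) (GA w)) => l; rewrite mem_filter => /andP[h _] y.
  by rewrite /GA in_setU1 (ord_gtF h).
- move=> l; rewrite mem_filter => /andP[h _] y; rewrite /GA.
  case: ifP => // lin; exfalso.
  have : l \in w by case: b lin => //; rewrite in_setU1 (ord_ltF h).
  by move/Hw; rewrite ltnNge ltnW.
Qed.

Lemma Tva_split (jo : 'I_k) (w : {set 'I_k}) (b : bool) y :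
  jo \notin w -> (forall l, l \in w -> (jo < l)%N) ->
  Tva (if b then jo |: w else w) y =
  chain (GAa w) (rev (post jo)) ((if b then Aadj jo else id) y).
Proof.
move=> jw Hw; rewrite /Tva (enum_split jo) rev_cat rev_cons -cats1 -catA !chain_cat.
have Epre : chain (GAa (if b then jo |: w else w))
   (rev [seq l : 'I_k <- enum 'I_k | (l < jo)%N]) y = y.
  apply: chain_idl => l; rewrite mem_rev mem_filter => /andP[h _] z; rewrite /GAa.
  case: ifP => // lin; exfalso.
  have : l \in w by case: b lin => //; rewrite in_setU1 (ord_ltF h).
  by move/Hw; rewrite ltnNge ltnW.
rewrite chain_cons chain_nil Epre {Epre}.
rewrite {2}/GAa; case: b; rewrite ?setU11 ?(negbTE jw) /post //.
apply: (@eq_chain (GAa (jo |: w)) (GAa w)) => l; rewrite mem_rev mem_filter => /andP[h _] z.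
by rewrite /GAa in_setU1 (ord_gtF h).
Qed.

Lemma Cv_U1 (jo : 'I_k) (w : {set 'I_k}) x :
  jo \notin w -> (forall l, l \in w -> (jo < l)%N) ->
  Cv (jo |: w) x = Aadj jo (A jo (Cv w x)).
Proof.
move=> jw Hw; rewrite /Cv.
rewrite (Tv_split true x jw Hw) (Tva_split true _ jw Hw).
rewrite -[w in Tv w]/(if false then jo |: w else w) (Tv_split false x jw Hw).
rewrite -[w in Tva w]/(if false then jo |: w else w) (Tva_split false _ jw Hw) /=.
rewrite (chain_comm (Y := fun y => Aadj jo (A jo y)) (c := fun _ => 1)).
- by rewrite big1 ?scale1r.
- exact: linGAa.
move=> l; rewrite mem_rev mem_filter => /andP[h _] z.
rewrite /GAa; case: ifP => _; last by rewrite scale1r.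
rewrite scale1r; change (T l (-1) (Aadj jo (A jo z)) = Aadj jo (A jo (T l (-1) z))).
by rewrite Ccomm.
Qed.

Lemma Xu_U1 (jo : 'I_k) (u : {set 'I_k}) x :
  jo \notin u -> (forall l, l \in u -> (jo < l)%N) ->
  Xu (jo |: u) x = Xu u x - Aadj jo (A jo (Xu u x)).
Proof.
move=> ju Hu; rewrite /Xu (bigID (fun v : {set 'I_k} => jo \in v)) /= addrC; congr (_ + _).
  apply: eq_bigl => v; apply/idP/idP.
    case/andP => /subsetP vs jv; apply/subsetP => y yv.
    have := vs y yv; rewrite in_setU1; case/orP => // /eqP ey.
    by move: jv; rewrite -ey yv.
  move=> vu; rewrite (subset_trans vu) ?subsetUr //=.
  by apply: contraNN ju; exact: (subsetP vu).
have LC : lin (fun y => Aadj jo (A jo y)) by exact: lin_comp (linAa jo) (linA jo).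
rewrite (@lin_bigsum_comm (fun y => Aadj jo (A jo y)) _ _ _ _ LC) -sumrN.
rewrite (reindex_onto (fun w => jo |: w) (fun v => v :\ jo)) /=; last first.
  by move=> v /andP[_ jv]; rewrite setD1K.
apply: eq_big => w.
  case jw: (jo \in w).
    have -> : (w \subset u) = false.
      by apply/negbTE; apply: contraNN ju => /subsetP; apply.
    have -> : ((jo |: w) :\ jo == w) = false.
      by apply/negbTE/eqP => e; have := setD11 jo (jo |: w); rewrite e jw.
    by rewrite andbF.
  rewrite setU1K ?jw // eqxx setU11 !andbT; apply/idP/idP.
    move/subsetP=> h; apply/subsetP => y yw; have := h y; rewrite !in_setU1 yw orbT.
    by move=> /(_ isT) /orP[/eqP ey|//]; move: jw; rewrite -ey yw.
  by move=> wu; rewrite setUS.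
move=> /andP[/andP[wu' _] /eqP e].
have jw : jo \notin w by rewrite -e setD11.
have wu : w \subset u.
  apply/subsetP => y yw; have := subsetP wu' y; rewrite !in_setU1 yw orbT.
  by move=> /(_ isT) /orP[/eqP ey|//]; move: jw; rewrite -ey yw.
have Hw : forall l, l \in w -> (jo < l)%N by move=> l lw; apply: Hu; exact: (subsetP wu).
by rewrite Cv_U1 // (linZ LC) cardsU1 (negbTE jw) add1n exprS mulN1r scaleNr.
Qed.


Lemma qXconj (i j : 'I_k) (z : int) : (i < j)%N -> (q i j ^ z)^* = q i j ^ (- z).
Proof.
move=> lt; case: z => n.
  change ((q i j ^+ n)^* = q i j ^ (- n%:Z)).
  have -> : (q i j ^+ n)^* = ((q i j)^*) ^+ n by exact: rmorphXn.
  by rewrite qconj // exprVn exprnN.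
rewrite NegzE opprK -exprnN.
have -> : ((q i j ^+ n.+1)^-1)^* = (((q i j)^*) ^+ n.+1)^-1.
  by rewrite fmorphV; congr (_^-1); exact: rmorphXn.
by rewrite qconj // exprVn invrK.
Qed.

Lemma conj_prod (I : Type) (s : seq I) (P : pred I) (F : I -> R[i]) :
  (\prod_(l <- s | P l) F l)^* = \prod_(l <- s | P l) (F l)^*.
Proof. exact: rmorph_prod. Qed.
Lemma conjM (a b : R[i]) : (a * b)^* = a^* * b^*. Proof. exact: rmorphM. Qed.
Lemma conjN1 : (-1 : R[i])^* = -1. Proof. exact: rmorphN1. Qed.

Lemma mem_pre (j : nat) (l : 'I_k) : (l \in pre j) = (l < j)%N.
Proof. by rewrite mem_filter mem_enum andbT. Qed.

Lemma psiD (jo : 'I_k) d a b : psi jo d (a + b) = psi jo d a * psi jo d b.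
Proof.
rewrite /psi -big_split /= big_seq [in RHS]big_seq; apply: eq_bigr => l.
by rewrite mem_pre => h; rewrite mulrDr exprzDr // qunit.
Qed.
Lemma psi0 (jo : 'I_k) d : psi jo d 0 = 1.
Proof. by rewrite /psi big1 // => l _; rewrite mulr0 expr0z. Qed.
Lemma psiN (jo : 'I_k) d b : psi jo d b * psi jo d (- b) = 1.
Proof. by rewrite -psiD addrN psi0. Qed.
Lemma psi_conj (jo : 'I_k) d b : (psi jo d b)^* = psi jo d (- b).
Proof.
rewrite /psi conj_prod big_seq [in RHS]big_seq; apply: eq_bigr => l.
by rewrite mem_pre => h; rewrite qXconj // mulrN.
Qed.
Lemma psi_sub (jo : 'I_k) (m n : 'I_k -> int) p :
  psi jo m p * psi jo n (- p) = psi jo (fun l => m l - n l) p.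
Proof.
rewrite /psi -big_split /= big_seq [in RHS]big_seq; apply: eq_bigr => l.
by rewrite mem_pre => h; rewrite -exprzDr ?qunit // mulrN -mulrBl.
Qed.
Lemma psi_ext (jo : 'I_k) (d d' : 'I_k -> int) b : (forall l : 'I_k, (l < jo)%N -> d l = d' l) -> psi jo d b = psi jo d' b.
Proof.
move=> E; rewrite /psi big_seq [in RHS]big_seq; apply: eq_bigr => l.
by rewrite mem_pre => h; rewrite E.
Qed.

Definition om (j : nat) (m n : 'I_k -> int) : R[i] :=
  \prod_(l <- pre j) psi l (fun i => m i - n i) (n l).
Lemma om_S (jo : 'I_k) m n : om jo.+1 m n = om jo m n * psi jo (fun i => m i - n i) (n jo).
Proof. by rewrite /om /pre filter_ltS big_cat big_seq1. Qed.
Lemma om0 m n : om 0 m n = 1.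
Proof. by rewrite /om /pre filter_lt0 big_nil. Qed.
Lemma om_ext j (m n m' n' : 'I_k -> int) : (forall l : 'I_k, (l < j)%N -> m l = m' l /\ n l = n' l) ->
  om j m n = om j m' n'.
Proof.
move=> E; rewrite /om big_seq [in RHS]big_seq; apply: eq_bigr => l.
rewrite mem_pre => h; have [_ ->] := E l h; apply: psi_ext => i hi.
by have [-> ->] := E i (ltn_trans hi h).
Qed.

Lemma CL (jo : 'I_k) d (e : int) w y :
  ip (W jo d w) (T jo e y) = psi jo d e * ip (W jo d (T jo (- e) w)) y.
Proof.
rewrite W_commT ipZ adjT opprK mulrA.
by rewrite -psiD addrN psi0 mul1r.
Qed.


Lemma TNS l (n : nat) w : T l (- (n.+1)%:Z) w = T l (- n%:Z) (Aadj l w).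
Proof. by case: n => [|n] //; rewrite /T /= -iterSr. Qed.
Lemma TS l (n : nat) w : T l (n.+1)%:Z w = T l n (A l w).
Proof. by rewrite /T /= -iterSr. Qed.
Lemma TS' l (n : nat) w : T l (n.+1)%:Z w = A l (T l n w).
Proof. by []. Qed.

Definition Cop (jo : 'I_k) (w : H) := Aadj jo (A jo w).
Arguments T : simpl never.
Arguments Cop : simpl never.
Lemma T0 l w : T l 0 w = w. Proof. by []. Qed.
Lemma T1 l w : T l 1 w = A l w. Proof. by []. Qed.
Lemma TN1 l w : T l (-1) w = Aadj l w. Proof. by []. Qed.

Lemma ID1 (jo : 'I_k) (a b : nat) v :
  T jo (a%:Z - b%:Z) v =
  \sum_(r < (minn a b).+1) T jo (- (b - r)%N%:Z) (T jo (a - r)%N v - Cop jo (T jo (a - r)%N v))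
  + T jo (- (b.+1)%:Z) (T jo (a.+1) v).
Proof.
elim: a b v => [|a IH] [|b] v.
- by rewrite big_ord1 /= !subn0 subr0 oppr0 !T0 TN1 T1 /Cop -addrA addNr addr0.
- rewrite big_ord1 /= !subn0 sub0r (linB (linT _ _)) (TNS jo b.+1) T0 T1 /Cop.
  by rewrite subrK.
- rewrite big_ord1 /= !subn0 subr0 T0 TS' /Cop.
  by rewrite subrK.
- rewrite minnSS big_ord_recl !subn0.
  have -> : (a.+1%:Z - b.+1%:Z) = a%:Z - b%:Z.
    by rewrite -[a.+1]addn1 -[b.+1]addn1 !PoszD; ring.
  under eq_bigr => i _ do rewrite lift0 !subSS.
  rewrite IH (linB (linT _ _)) (TNS jo b.+1) (TS' jo a.+1) -/(Cop jo (T jo a.+1 v)).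
  by rewrite [in RHS]addrAC subrK [in RHS]addrC.
Qed.




Lemma ID1N (jo : 'I_k) (a b N : nat) v : (a <= N)%N -> (b <= N)%N ->
  T jo (a%:Z - b%:Z) v =
  \sum_(r < N.+1) (if (r <= a)%N && (r <= b)%N then
      T jo (- (b - r)%N%:Z) (T jo (a - r)%N v - Cop jo (T jo (a - r)%N v)) else 0)
  + T jo (- (b.+1)%:Z) (T jo (a.+1) v).
Proof.
move=> haN hbN; rewrite ID1; congr (_ + _).
rewrite -big_mkcond /=.
set F := fun r : nat => T jo (- (b - r)%N%:Z) (T jo (a - r)%N v - Cop jo (T jo (a - r)%N v)).
rewrite (@big_ord_widen_cond _ _ _ (minn a b).+1 N.+1 xpredT F); last first.
  by rewrite ltnS (leq_trans (geq_minl a b)).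
by apply: eq_bigl => r /=; rewrite ltnS leq_min.
Qed.

Lemma ID1X (jo : 'I_k) (u : {set 'I_k}) (a b N : nat) z :
  (forall l, l \in u -> (jo < l)%N) -> jo \notin u -> (a <= N)%N -> (b <= N)%N ->
  T jo (a%:Z - b%:Z) (Xu u z) =
  \sum_(r < N.+1) (if (r <= a)%N && (r <= b)%N then
      T jo (- (b - r)%N%:Z) (Xu (jo |: u) (T jo (a - r)%N z)) else 0)
  + T jo (- (b.+1)%:Z) (Xu u (T jo (a.+1) z)).
Proof.
move=> Hu ju haN hbN; rewrite (@ID1N jo a b N _ haN hbN) -Xu_commT //; congr (_ + _).
apply: eq_bigr => r _; case: ifP => // _.
by rewrite -Xu_commT // Xu_U1.
Qed.

Lemma PH (jo : 'I_k) (m n : 'I_k -> int) (p : int) (e : nat) w y :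
  p + e%:Z = n jo ->
  om jo.+1 m n * ip (W jo (fun l => m l - n l) (T jo (- e%:Z) w)) y =
  om jo m n * ip (W jo (fun l => m l - n l) (psi jo m p *: w)) (psi jo n p *: T jo e y).
Proof.
move=> He.
have E : psi jo m p * (psi jo n p)^* * psi jo (fun l => m l - n l) e =
         psi jo (fun l => m l - n l) (n jo).
  by rewrite psi_conj psi_sub -psiD He.
rewrite om_S (linZ (linW _ _)) ipZ ipZr CL -E.
by rewrite !mulrA.
Qed.

Definition gr (jo : 'I_k) (P : int) (r : nat) (m : 'I_k -> int) (z : H) : H :=
  if (r <= absz (m jo - P))%N then psi jo m (P + r%:Z) *: T jo (absz (m jo - P) - r)%N z else 0.
Definition gb (jo : 'I_k) (P : int) (m : 'I_k -> int) (z : H) : H :=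
  psi jo m (P - 1) *: T jo (absz (m jo - P)).+1 z.

Lemma absz_sub (x P : int) : P <= x -> (absz (x - P))%:Z = x - P.
Proof. by move=> h; rewrite abszE ger0_norm // subr_ge0. Qed.

Lemma PPf (jo : 'I_k) (u : {set 'I_k}) (P : int) (N : nat) (m n : 'I_k -> int) z y :
  (forall l, l \in u -> (jo < l)%N) -> jo \notin u ->
  P <= m jo -> P <= n jo -> (absz (m jo - P) <= N)%N -> (absz (n jo - P) <= N)%N ->
  om jo.+1 m n * ip (W jo.+1 (fun l => m l - n l) (Xu u z)) y =
  \sum_(r < N.+1) om jo m n * ip (W jo (fun l => m l - n l) (Xu (jo |: u) (gr jo P r m z))) (gr jo P r n y)
  + om jo m n * ip (W jo (fun l => m l - n l) (Xu u (gb jo P m z))) (gb jo P n y).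
Proof.
move=> Hu ju hm hn hmN hnN.
set a := absz (m jo - P); set b := absz (n jo - P).
have Ea : m jo = P + a%:Z by rewrite absz_sub // addrC subrK.
have Eb : n jo = P + b%:Z by rewrite absz_sub // addrC subrK.
have Ed : m jo - n jo = a%:Z - b%:Z by rewrite Ea Eb; ring.
rewrite W_S Ed (@ID1X jo u a b N z Hu ju hmN hnN) (linD (linW _ _)) ipD mulrDr.
rewrite (@lin_bigsum_comm (W jo (fun l => m l - n l)) _ _ _ _ (linW _ _)) ip_bigsum mulr_sumr.
congr (_ + _).
  apply: eq_bigr => r _; rewrite /gr -/a -/b.
  case: ifP => [/andP[ra rb]|].
    rewrite ra rb (linZ (linXu _)); apply: PH.
    by rewrite Eb -addrA -PoszD subnKC.
  case: (leqP r a) => ra /=.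
    move=> /negbT rb; rewrite (negbTE rb).
    by rewrite (lin0 (linW _ _)) ip0l ip0r !mulr0.
  by rewrite (lin0 (linW _ _)) (lin0 (linXu _)) (lin0 (linW _ _)) !ip0l !mulr0.
rewrite /gb -/a -/b (linZ (linXu _)); apply: PH.
rewrite Eb; ring.
Qed.


Definition Kf (j : nat) (X : H -> H) (I : eqType) (S : seq I) (pi : I -> 'I_k -> int)
  (g : I -> H) : R[i] :=
  \sum_(s <- S) \sum_(t <- S) om j (pi s) (pi t) * ip (W j (fun l => pi s l - pi t l) (X (g s))) (g t).

Definition Claim (j : nat) : Prop := forall u : {set 'I_k}, (forall l, l \in u -> (j <= l)%N) ->
  forall (I : eqType) (S : seq I) pi g, 0 <= Kf j (Xu u) S pi g.

Lemma leq_in_sum (I : eqType) (S : seq I) (F : I -> nat) s :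
  s \in S -> (F s <= \sum_(i <- S) F i)%N.
Proof.
elim: S => [|x S IH] //; rewrite in_cons big_cons => /orP[/eqP ->|h].
  exact: leq_addr.
exact: leq_trans (IH h) (leq_addl _ _).
Qed.

Lemma fwd (jo : 'I_k) : Claim jo -> Claim jo.+1.
Proof.
move=> C u Hu I S pi g.
have Hu' : forall l, l \in u -> (jo < l)%N by move=> l /Hu.
have ju : jo \notin u by apply/negP => /Hu; rewrite ltnn.
set M := (\sum_(s <- S) absz (pi s jo))%N.
set P : int := - (M%:Z).
set N := (M + M)%N.
have bnd : forall s, s \in S -> P <= pi s jo /\ (absz (pi s jo - P) <= N)%N.
  move=> s hs; have := leq_in_sum (fun s => absz (pi s jo)) hs; rewrite -/M /P /N => h.
  split; lia.
have E : Kf jo.+1 (Xu u) S pi g =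
   \sum_(r < N.+1) Kf jo (Xu (jo |: u)) S pi (fun s => gr jo P r (pi s) (g s))
   + Kf jo (Xu u) S pi (fun s => gb jo P (pi s) (g s)).
  rewrite /Kf; transitivity (\sum_(s <- S) \sum_(t <- S)
     (\sum_(r < N.+1) om jo (pi s) (pi t) *
         ip (W jo (fun l => pi s l - pi t l) (Xu (jo |: u) (gr jo P r (pi s) (g s)))) (gr jo P r (pi t) (g t))
      + om jo (pi s) (pi t) *
         ip (W jo (fun l => pi s l - pi t l) (Xu u (gb jo P (pi s) (g s)))) (gb jo P (pi t) (g t)))).
    rewrite big_seq [RHS]big_seq; apply: eq_bigr => s hs.
    rewrite big_seq [RHS]big_seq; apply: eq_bigr => t ht.
    have [hm hmN] := bnd s hs; have [hn hnN] := bnd t ht.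
    exact: PPf.
  under eq_bigr => s _ do rewrite big_split /=.
  rewrite big_split /=; congr (_ + _).
  rewrite [RHS]exchange_big; apply: eq_bigr => s _.
  by rewrite [RHS]exchange_big.
rewrite E; apply: addr_ge0.
  apply: sumr_ge0 => r _; apply: C => l; rewrite in_setU1 => /orP[/eqP -> //|/Hu'].
  exact: ltnW.
by apply: C => l /Hu' /ltnW.
Qed.


Definition mm (jo : 'I_k) (m : 'I_k -> int) (e : bool) : 'I_k -> int :=
  fun l => if l == jo then (e : nat)%:Z else m l.

Lemma mm_lt (jo : 'I_k) m e (l : 'I_k) : (l < jo)%N -> mm jo m e l = m l.
Proof. by move=> h; rewrite /mm (ord_ltF h). Qed.

Lemma mm_jo (jo : 'I_k) m e : mm jo m e jo = (e : nat)%:Z.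
Proof. by rewrite /mm eqxx. Qed.

Lemma reduce (jo : 'I_k) (m n : 'I_k -> int) (e e' : bool) w v :
  om jo.+1 (mm jo m e) (mm jo n e') * ip (W jo.+1 (fun l => mm jo m e l - mm jo n e' l) w) v =
  om jo m n * psi jo (fun l => m l - n l) (e' : nat)%:Z *
    ip (W jo (fun l => m l - n l) (T jo ((e : nat)%:Z - (e' : nat)%:Z) w)) v.
Proof.
rewrite om_S W_S /= !mm_jo.
rewrite (@om_ext jo _ _ m n); last by move=> l h; rewrite !mm_lt.
rewrite (@psi_ext jo _ (fun l => m l - n l)); last by move=> l h; rewrite !mm_lt.
rewrite (@W_ext jo _ (fun l => m l - n l)) // => l h; by rewrite !mm_lt.
Qed.

Definition zz (jo : 'I_k) (m : 'I_k -> int) (z : H) (e : bool) : H :=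
  if e then (psi jo m 1)^* *: z else - ((psi jo m 1)^* *: A jo z).

Lemma PPb (jo : 'I_k) (u : {set 'I_k}) (m n : 'I_k -> int) z y :
  (forall l, l \in u -> (jo < l)%N) -> jo \notin u ->
  \sum_(e <- [:: true; false]) \sum_(e' <- [:: true; false])
     om jo.+1 (mm jo m e) (mm jo n e') *
       ip (W jo.+1 (fun l => mm jo m e l - mm jo n e' l) (Xu u (zz jo m z e))) (zz jo n y e')
  = om jo m n * ip (W jo (fun l => m l - n l) (Xu (jo |: u) z)) y.
Proof.
move=> Hu ju.
rewrite !big_cons !big_nil !addr0 !reduce /zz.
set d := fun l => m l - n l.
set F := psi jo m 1; set G := psi jo n 1.
have HF : F * F^* = 1 by rewrite /F psi_conj psiN.
have HG : G^* * G = 1 by rewrite /G psi_conj -psiD addNr psi0.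
have kap : psi jo d 1 * F^* * G = 1.
  have Hd : psi jo d 1 = F * G^* by rewrite /d -psi_sub /G psi_conj.
  rewrite Hd; transitivity ((F * F^*) * (G^* * G)); first by ring.
  by rewrite HF HG mulr1.
have TC : forall w, T jo (-1) (T jo 1 w) = Cop jo w by [].
have e11 : ((true : nat)%:Z - (true : nat)%:Z) = 0 by [].
have e10 : ((true : nat)%:Z - (false : nat)%:Z) = 1 by [].
have e01 : ((false : nat)%:Z - (true : nat)%:Z) = -1 by [].
have e00 : ((false : nat)%:Z - (false : nat)%:Z) = 0 by [].
have p1 : psi jo d (true : nat)%:Z = psi jo d 1 by [].
have p0 : psi jo d (false : nat)%:Z = 1 by exact: psi0.
rewrite e11 e10 e01 e00 p1 p0.
have AT : forall w, A jo w = T jo 1 w by [].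
have t1 : ip (W jo d (T jo 0 (Xu u (F^* *: z)))) (G^* *: y) = F^* * G * ip (W jo d (Xu u z)) y.
  by rewrite T0 (linZ (linXu u)) (linZ (linW _ _)) ipZ ipZr conjCK mulrA.
have t2 : ip (W jo d (T jo 1 (Xu u (F^* *: z)))) (- (G^* *: A jo y)) =
          - (F^* * G * psi jo d 1 * ip (W jo d (Cop jo (Xu u z))) y).
  rewrite (linZ (linXu u)) (linZ (linT _ _)) (linZ (linW _ _)) ipNr ipZr ipZ conjCK.
  rewrite AT (@CL jo d 1 (T jo 1 (Xu u z)) y) TC; ring.
have t3 : ip (W jo d (T jo (-1) (Xu u (- (F^* *: A jo z))))) (G^* *: y) =
          - (F^* * G * ip (W jo d (Cop jo (Xu u z))) y).
  rewrite (linN (linXu u)) (linZ (linXu u)) AT (Xu_commT _ _ Hu).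
  rewrite (linN (linT _ _)) (linZ (linT _ _)) (linN (linW _ _)) (linZ (linW _ _)).
  rewrite ipN ipZ ipZr conjCK TC; ring.
have t4 : ip (W jo d (T jo 0 (Xu u (- (F^* *: A jo z))))) (- (G^* *: A jo y)) =
          F^* * G * psi jo d 1 * ip (W jo d (Cop jo (Xu u z))) y.
  rewrite T0 (linN (linXu u)) (linZ (linXu u)) AT (Xu_commT _ _ Hu).
  rewrite (linN (linW _ _)) (linZ (linW _ _)) ipN ipNr ipZ ipZr conjCK.
  rewrite (@CL jo d 1 (T jo 1 (Xu u z)) y) TC; ring.
rewrite t1 t2 t3 t4 Xu_U1 // -/(Cop jo (Xu u z)) (linB (linW _ _)) ipB.
transitivity (om jo m n * (psi jo d 1 * F^* * G) *
   (ip (W jo d (Xu u z)) y - ip (W jo d (Cop jo (Xu u z))) y)).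
  by ring.
by rewrite kap mulr1.
Qed.



Lemma bwd (jo : 'I_k) : Claim jo.+1 -> Claim jo.
Proof.
move=> C u Hu I S pi g.
have e00 : ((false : nat)%:Z - (false : nat)%:Z) = 0 by [].
case: (boolP (jo \in u)) => ju.
  set u' := u :\ jo.
  have ju' : jo \notin u' by rewrite setD11.
  have Hu' : forall l, l \in u' -> (jo < l)%N.
    move=> l; rewrite in_setD1 => /andP[ne lu]; rewrite ltn_neqAle Hu // andbT.
    by apply: contraNneq ne => e; apply/eqP; apply: val_inj.
  have Eu : u = jo |: u' by rewrite setD1K.
  rewrite Eu.
  pose S' := [seq (s, e) | s <- S, e <- [:: true; false]].
  pose pi' (x : I * bool) := mm jo (pi x.1) x.2.
  pose g' (x : I * bool) := zz jo (pi x.1) (g x.1) x.2.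
  have E : Kf jo (Xu (jo |: u')) S pi g = Kf jo.+1 (Xu u') S' pi' g'.
    rewrite /Kf /S' big_allpairs.
    under [RHS]eq_bigr => s _ do under eq_bigr => e _ do rewrite big_allpairs.
    under [RHS]eq_bigr => s _ do rewrite exchange_big.
    apply: eq_bigr => s _; apply: eq_bigr => t _.
    by rewrite -PPb.
  by rewrite E; apply: C => l /Hu'.
have Hu'' : forall l, l \in u -> (jo < l)%N.
  move=> l lu; rewrite ltn_neqAle Hu // andbT.
  by apply: contraNneq ju => e; have -> : jo = l by apply/val_inj.
have E : Kf jo (Xu u) S pi g = Kf jo.+1 (Xu u) S (fun s => mm jo (pi s) false) g.
  rewrite /Kf; apply: eq_bigr => s _; apply: eq_bigr => t _.
  by rewrite reduce e00 T0 psi0 mulr1.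
by rewrite E; apply: C.
Qed.

Lemma claims_up : Claim 0 -> Claim k.
Proof.
move=> C0; suff : forall j, (j <= k)%N -> Claim j by apply.
elim=> [//|j IH] hj.
exact: (@fwd (Ordinal hj)) (IH (ltnW hj)).
Qed.

Lemma claims_down : Claim k -> Claim 0.
Proof.
move=> Ck; suff : forall n, (n <= k)%N -> Claim (k - n) by move/(_ k (leqnn k)); rewrite subnn.
elim=> [_|n IH hn]; first by rewrite subn0.
have hj : (k - n.+1 < k)%N by lia.
have := @bwd (Ordinal hj); rewrite /= subnSK //; apply.
exact: IH (ltnW hn).
Qed.


Lemma Tdc_xe v x : Tdc q A Aadj (xe v) x = Tv v x.
Proof.
rewrite /Tdc big1 ?scale1r; last by move=> p _; rewrite ffunE expr0z.
change (chain (fun l => T l ((xe v).2 l)) (enum 'I_k) x = Tv v x).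
apply: eq_chain => l _ y; rewrite /GA ffunE; by case: (l \in v).
Qed.

Definition BrehmerHyp := forall (u : {set 'I_k}) (x : H),
  0 <= \sum_(v : {set 'I_k} | v \subset u)
         (-1) ^+ #|v| * ip (Tdc q A Aadj (xe v) x) (Tdc q A Aadj (xe v) x).

Lemma claim0_iff : Claim 0 <-> BrehmerHyp.
Proof.
split.
  move=> C u x; have := C u (fun l _ => leq0n l) unit [:: tt] (fun _ _ => 0) (fun _ => x).
  rewrite /Kf !big_cons !big_nil !addr0 om0 W0 mul1r Xu_ip.
  by move=> H0; under eq_bigr => v _ do rewrite Tdc_xe.
move=> Hy u _ I S pi g.
set G := \sum_(s <- S) g s.
have -> : Kf 0 (Xu u) S pi g = ip (Xu u G) G.
  rewrite /G (@lin_bigsum_comm (Xu u) _ _ _ _ (linXu u)) ip_bigsum /Kf.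
  apply: eq_bigr => s _; rewrite ip_sumr; apply: eq_bigr => t _.
  by rewrite om0 W0 mul1r.
rewrite Xu_ip.
by under eq_bigr => v _ do rewrite -Tdc_xe.
Qed.


Lemma LINK (Fe : 'I_k -> 'I_k -> int) :
  \prod_(l <- pre k) \prod_(i <- pre l) q i l ^ Fe i l =
  \prod_(p : ltpair k) q (sval p).1 (sval p).2 ^ Fe (sval p).1 (sval p).2.
Proof.
rewrite /pre filter_ltk big_enum /=.
under eq_bigr => l _ do rewrite big_filter big_enum_cond /=.
rewrite (exchange_big_dep xpredT) //= pair_big_dep /=.
rewrite (reindex_omap (fun p : ltpair k => sval p) insub (P := fun p : 'I_k * 'I_k => (p.1 < p.2)%N)
   (F := fun p => q p.1 p.2 ^ Fe p.1 p.2)) /=; last first.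
  by move=> [i j] h; rewrite insubT.
by apply: eq_bigl => p; rewrite (valP p) valK eqxx.
Qed.


Definition cc (g : Gdc k) : R[i] := \prod_(p : ltpair k) q (sval p).1 (sval p).2 ^ g.1 p.

Lemma Tdc_W (g : Gdc k) x : Tdc q A Aadj g x = cc g *: W k (fun l => g.2 l) x.
Proof. by rewrite /Tdc /W /pre filter_ltk. Qed.

Lemma om_link (m n : 'I_k -> int) : om k m n =
  \prod_(p : ltpair k) q (sval p).1 (sval p).2 ^ ((m (sval p).1 - n (sval p).1) * n (sval p).2).
Proof. by rewrite -(LINK (fun i l => (m i - n i) * n l)). Qed.

Lemma qpunit (p : ltpair k) : q (sval p).1 (sval p).2 \is a GRing.unit.
Proof. exact: qunit (valP p). Qed.

Lemma cc_conj (g : Gdc k) : (cc g)^* = \prod_(p : ltpair k) q (sval p).1 (sval p).2 ^ (- g.1 p).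
Proof. by rewrite /cc conj_prod; apply: eq_bigr => p _; rewrite qXconj // (valP p). Qed.

Lemma GF (x y : Gdc k) z w :
  ip (Tdc q A Aadj (gmul (ginv y) x) z) w =
  om k (fun l => x.2 l) (fun l => y.2 l) *
    ip (W k (fun l => x.2 l - y.2 l) (cc x *: z)) (cc y *: w).
Proof.
rewrite Tdc_W ipZ (linZ (linW _ _)) ipZ ipZr.
have -> : W k (fun l => (gmul (ginv y) x).2 l) z = W k (fun l => x.2 l - y.2 l) z.
  by apply: W_ext => l _; rewrite !ffunE addrC.
have -> : cc (gmul (ginv y) x) = cc x * (cc y)^* * om k (fun l => x.2 l) (fun l => y.2 l).
  rewrite cc_conj om_link /cc -!big_split /=; apply: eq_bigr => p _.
  rewrite !ffunE -!exprzDr ?qpunit //; congr (_ ^ _); ring.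
by rewrite !mulrA; congr (_ * _); ring.
Qed.


Definition Lam (j : nat) (m : 'I_k -> int) : R[i] :=
  \prod_(l <- pre j) psi l (fun i => - m i) (- m l).

Lemma W_adj j : (j <= k)%N -> forall m x y,
  ip (W j m x) y = Lam j m * ip x (W j (fun l => - m l) y).
Proof.
elim: j => [|j IH] hj m x y.
  by rewrite /Lam /pre filter_lt0 big_nil mul1r !W0.
set jo := Ordinal hj.
have E : T jo (- m jo) (W j (fun l => - m l) y) =
         psi jo (fun l => - m l) (m jo) *: W j.+1 (fun l => - m l) y.
  by rewrite (W_S jo) (W_commT jo) scalerA psiN scale1r.
rewrite (W_S jo) (IH (ltnW hj)) adjT E ipZr psi_conj.
have -> : Lam j.+1 m = Lam j m * psi jo (fun i => - m i) (- m jo).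
  by rewrite /Lam -[j.+1]/(jo.+1 : nat) /pre filter_ltS big_cat big_seq1.
by rewrite mulrA.
Qed.

Lemma Tdc_adj (s : Gdc k) : is_adjoint ip (Tdc q A Aadj s) (Tdc q A Aadj (ginv s)).
Proof.
move=> x y; rewrite !Tdc_W ipZ ipZr (W_adj (leqnn k)).
have -> : W k (fun l => - s.2 l) y = W k (fun l => (ginv s).2 l) y.
  by apply: W_ext => l _; rewrite ffunE.
rewrite mulrA; congr (_ * _).
have := LINK (fun i l => (- s.2 i) * (- s.2 l)); rewrite /= => EL.
rewrite /Lam /psi EL cc_conj /cc -big_split /=; apply: eq_bigr => p _.
by rewrite !ffunE -exprzDr ?qpunit //; congr (_ ^ _); ring.
Qed.


Lemma Xu0 x : Xu set0 x = x.
Proof.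
rewrite /Xu (big_pred1 set0); last by move=> v; rewrite /= subset0.
rewrite cards0 expr0 scale1r /Cv.
rewrite /Tva chain_idl; last by move=> l _ y; rewrite /GAa in_set0.
by rewrite /Tv chain_idl // => l _ y; rewrite /GA in_set0.
Qed.

Lemma PL (I T : eqType) (f : I -> T) (S : seq I) (F : I -> R[i]) :
  \sum_(a <- undup [seq f s | s <- S]) \sum_(s <- S | f s == a) F s = \sum_(s <- S) F s.
Proof.
rewrite (exchange_big_dep xpredT) //=.
rewrite big_seq [RHS]big_seq; apply: eq_bigr => s hs.
rewrite big_mkcond (bigD1_seq (f s)) ?undup_uniq ?mem_undup ?map_f //= eqxx.
rewrite big1 ?addr0 // => a /negbTE ne.
by rewrite eq_sym ne.
Qed.

Lemma ip_bigsumr (I : Type) (r : seq I) (P : pred I) (F : I -> H) z :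
  ip z (\sum_(i <- r | P i) F i) = \sum_(i <- r | P i) ip z (F i).
Proof. apply: (big_morph (fun x => ip z x) (fun x y => ipDr x y z) (ip0r z)). Qed.

Lemma cc0 (m : {ffun 'I_k -> int}) : cc ([ffun _ => 0], m) = 1.
Proof. by rewrite /cc big1 // => p _; rewrite ffunE expr0z. Qed.

Lemma top_iff : Claim k <-> posdef_Gdc ip (Tdc q A Aadj).
Proof.
split.
  move=> C; split; first exact: Tdc_adj.
  move=> S h _.
  have H0 : forall l, l \in (set0 : {set 'I_k}) -> (k <= l)%N by move=> l; rewrite in_set0.
  have := C set0 H0 _ S (fun s l => s.2 l) (fun s => cc s *: h s).
  suff -> : Kf k (Xu set0) S (fun s l => s.2 l) (fun s => cc s *: h s) =
    \sum_(s <- S) \sum_(t <- S) ip (Tdc q A Aadj (gmul (ginv t) s) (h s)) (h t) by [].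
  rewrite /Kf; apply: eq_bigr => s _; apply: eq_bigr => t _.
  by rewrite GF Xu0.
move=> [_ Hp] u Hu I S pi g.
have -> : u = set0.
  apply/eqP; rewrite -subset0; apply/subsetP => l lu.
  by have := Hu l lu; rewrite leqNgt ltn_ord.
pose fp (s : I) : {ffun 'I_k -> int} := finfun (pi s).
pose ms := undup [seq fp s | s <- S].
pose S0 : seq (Gdc k) := [seq ([ffun _ => 0], m) | m <- ms].
pose h (x : Gdc k) : H := \sum_(s <- S | fp s == x.2) g s.
have U : uniq S0 by rewrite map_inj_uniq ?undup_uniq // => m1 m2 [].
have := Hp S0 h U.
have E1 : forall m n : {ffun 'I_k -> int},
  ip (Tdc q A Aadj (gmul (ginv ([ffun _ => 0], n)) ([ffun _ => 0], m)) (h ([ffun _ => 0], m)))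
     (h ([ffun _ => 0], n)) =
  \sum_(s <- S | fp s == m) \sum_(t <- S | fp t == n)
     om k (pi s) (pi t) * ip (W k (fun l => pi s l - pi t l) (g s)) (g t).
  move=> m n; rewrite GF !cc0 !scale1r /h /=.
  rewrite (@lin_bigsum_comm (W k (fun l => m l - n l)) _ _ _ _ (linW _ _)) ip_bigsum mulr_sumr.
  apply: eq_bigr => s /eqP hs; rewrite ip_bigsumr mulr_sumr; apply: eq_bigr => t /eqP ht.
  rewrite -hs -ht.
  have -> : om k (fun l => fp s l) (fun l => fp t l) = om k (pi s) (pi t).
    by apply: om_ext => l _; rewrite !ffunE.
  congr (_ * ip _ _); apply: W_ext => l _; by rewrite !ffunE.
suff -> : \sum_(s <- S0) \sum_(t <- S0) ip (Tdc q A Aadj (gmul (ginv t) s) (h s)) (h t) =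
          Kf k (Xu set0) S pi g by [].
rewrite /S0 big_map; under eq_bigr => x _ do rewrite big_map.
under eq_bigr => x _ do under eq_bigr => y _ do rewrite E1.
under eq_bigr => x _ do rewrite exchange_big.
under eq_bigr => x _ do under eq_bigr => s _ do rewrite PL.
rewrite PL /Kf; apply: eq_bigr => s _; apply: eq_bigr => t _.
by rewrite Xu0.
Qed.


Lemma main_iff : posdef_Gdc ip (Tdc q A Aadj) <-> BrehmerHyp.
Proof.
split => [P | B].
  apply/claim0_iff; apply: claims_down; exact/top_iff.
apply/top_iff; apply: claims_up; exact/claim0_iff.
Qed.

End Main.

Unset Implicit Arguments.

Theorem theorem3p2 (R : realType) (H : lmodType R[i]) (ip : H -> H -> R[i])
  (k : nat) (A Aadj : 'I_k -> H -> H) (q : 'I_k -> 'I_k -> R[i]) :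
  is_hilbert ip ->
  (forall l, is_linear_op (A l)) ->
  (forall l, is_linear_op (Aadj l)) ->
  (forall l, is_adjoint ip (A l) (Aadj l)) ->
  (forall l, is_contraction ip (A l)) ->
  (forall i j : 'I_k, (i < j)%N -> `|q i j| = 1) ->
  (forall i j : 'I_k, (i < j)%N -> forall x : H,
      A i (A j x) = q i j *: A j (A i x) /\
      A i (Aadj j x) = (q i j)^* *: Aadj j (A i x)) ->
  (posdef_Gdc ip (Tdc q A Aadj) <->
   forall u : {set 'I_k}, forall x : H,
     0 <= \sum_(v : {set 'I_k} | v \subset u)
            (-1) ^+ #|v| * ip (Tdc q A Aadj (xe v) x) (Tdc q A Aadj (xe v) x)).
Proof.
move=> Hhil HA HAa Hadj _ Hq Hc.
exact: (main_iff Hhil HA HAa Hadj Hq Hc).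
Qed.
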